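(* Let $m,n,r,p,s$ be positive integers. Let $\mathbf{A}\in\mathbb{R}^{m\times n}$ and suppose $$\mathbf{A}=\mathbf{U}\mathbf{S}\mathbf{V}+\mathbf{E},$$ where $\mathbf{U}\in\mathbb{R}^{m\times r}$ has orthonormal columns ($\mathbf{U}^\top\mathbf{U}=\mathbf{I}_r$), $\mathbf{S}\in\mathbb{R}^{r\times r}$, $\mathbf{V}\in\mathbb{R}^{r\times n}$ has orthonormal rows ($\mathbf{V}\mathbf{V}^\top=\mathbf{I}_r$), and the error $\mathbf{E}\in\mathbb{R}^{m\times n}$ satisfies $\mathbf{U}^\top\mathbf{E}=\mathbf{0}$. Let $\mathbf{B}\in\mathbb{R}^{p\times n}$ be written as $$\mathbf{B}=\mathbf{P}\mathbf{V}+\mathbf{L}\mathbf{Q},$$ where $\mathbf{P}\in\mathbb{R}^{p\times r}$, $\mathbf{L}\in\mathbb{R}^{p\times s}$, and $\mathbf{Q}\in\mathbb{R}^{s\times n}$ has orthonormal rows ($\mathbf{Q}\mathbf{Q}^\top=\mathbf{I}_s$) with $\mathbf{V}\mathbf{Q}^\top=\mathbf{0}$. Define $$\mathbf{S}'=\begin{bmatrix}\mathbf{S}&\mathbf{0}\\ \mathbf{P}&\mathbf{L}\end{bmatrix}\in\mathbb{R}^{(r+p)\times(r+s)},$$ and let $\mathbf{U}'\in\mathbb{R}^{(r+p)\times q}$, $\tilde{\mathbf{S}}\in\mathbb{R}^{q\times q}$, $\mathbf{V}'\in\mathbb{R}^{q\times(r+s)}$ be any matrices (for some positive integer $q$), with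 $\mathbf{E}'=\mathbf{S}'-\mathbf{U}'\tilde{\mathbf{S}}\mathbf{V}'$. Set $$\tilde{\mathbf{A}}=\begin{bmatrix}\mathbf{A}\\ \mathbf{B}\end{bmatrix},\quad \tilde{\mathbf{U}}=\begin{bmatrix}\mathbf{U}&\mathbf{0}\\ \mathbf{0}&\mathbf{I}_p\end{bmatrix}\mathbf{U}',\quad \tilde{\mathbf{V}}=\mathbf{V}'\begin{bmatrix}\mathbf{V}\\ \mathbf{Q}\end{bmatrix}.$$ Then $$\|\tilde{\mathbf{A}}-\tilde{\mathbf{U}}\tilde{\mathbf{S}}\tilde{\mathbf{V}}\|_F^2=\|\mathbf{E}\|_F^2+\|\mathbf{E}'\|_F^2 = \|\mathbf{A}-\mathbf{U}\mathbf{S}\mathbf{V}\|_F^2+\|\mathbf{S}'-\mathbf{U}'\tilde{\mathbf{S}}\mathbf{V}'\|_F^2.$$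
   Context: $\|\cdot\|_F$ denotes the Frobenius norm; $\mathbf{I}_k$ is the $k\times k$ identity matrix and $\mathbf{0}$ denotes a zero matrix of the appropriate size. *)

(* Defs.v *)
From mathcomp Require Import all_boot all_order all_algebra.
From mathcomp Require Import reals.
Set Implicit Arguments. Unset Strict Implicit. Unset Printing Implicit Defensive.
Import Order.TTheory GRing.Theory Num.Theory.
Local Open Scope ring_scope.

Definition frob2 (R : realType) (m n : nat) (A : 'M[R]_(m, n)) : R :=
  \sum_(i < m) \sum_(j < n) A i j ^+ 2.

(* Main.v *)
Require Import Defs.
From mathcomp Require Import all_boot all_order all_algebra.
From mathcomp Require Import reals.
Import Order.TTheory GRing.Theory Num.Theory.
Local Open Scope ring_scope.

Theorem mainTheorem1 (R : realType) (m n r p s q : nat)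
  (Hm : (0 < m)%N) (Hn : (0 < n)%N) (Hr : (0 < r)%N) (Hp : (0 < p)%N)
  (Hs : (0 < s)%N) (Hq : (0 < q)%N)
  (A : 'M[R]_(m, n)) (U : 'M[R]_(m, r)) (S : 'M[R]_(r, r)) (V : 'M[R]_(r, n))
  (E : 'M[R]_(m, n))
  (B : 'M[R]_(p, n)) (P : 'M[R]_(p, r)) (L : 'M[R]_(p, s)) (Q : 'M[R]_(s, n))
  (U' : 'M[R]_(r + p, q)) (St : 'M[R]_(q, q)) (V' : 'M[R]_(q, r + s)) :
  A = U *m S *m V + E ->
  U^T *m U = 1%:M ->
  V *m V^T = 1%:M ->
  U^T *m E = 0 ->
  B = P *m V + L *m Q ->
  Q *m Q^T = 1%:M ->
  V *m Q^T = 0 ->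
  let S' : 'M[R]_(r + p, r + s) := block_mx S 0 P L in
  let E' := S' - U' *m St *m V' in
  let At : 'M[R]_(m + p, n) := col_mx A B in
  let Ut : 'M[R]_(m + p, q) := block_mx U 0 0 (1%:M : 'M[R]_p) *m U' in
  let Vt : 'M[R]_(q, n) := V' *m col_mx V Q in
  frob2 (At - Ut *m St *m Vt) = frob2 E + frob2 E' /\
  frob2 E + frob2 E' = frob2 (A - U *m S *m V) + frob2 (S' - U' *m St *m V').
Proof.
move=> hA hU hV hUE hB hQ hVQ S' E' At Ut Vt.
have frobT : forall (k l : nat) (M : 'M[R]_(k, l)), frob2 M = \tr (M *m M^T).
  move=> k l M; rewrite /frob2 /mxtrace; apply: eq_bigr => i _.
  rewrite mxE; apply: eq_bigr => j _; by rewrite !mxE expr2.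
have hE : A - U *m S *m V = E by rewrite hA addrAC subrr add0r.
split; last by rewrite hE.
pose W : 'M[R]_(m + p, r + p) := block_mx U 0 0 1%:M.
pose Z : 'M[R]_(r + s, n) := col_mx V Q.
pose Y : 'M[R]_(m + p, n) := col_mx E 0.
have hWW : W^T *m W = 1%:M.
  rewrite /W tr_block_mx mulmx_block !trmx0 !mul0mx !mulmx0 !addr0 !add0r hU.
  by rewrite trmx1 mul1mx -scalar_mx_block.
have hWY : W^T *m Y = 0.
  rewrite /W /Y tr_block_mx mul_block_col !trmx0 !mul0mx !mulmx0 hUE !addr0.
  by rewrite col_mx0.
have hZZ : Z *m Z^T = 1%:M.
  rewrite /Z tr_col_mx mul_col_row hV hQ hVQ.
  have -> : Q *m V^T = 0 by by move: (congr1 trmx hVQ); rewrite trmx_mul trmxK trmx0.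
  by rewrite -scalar_mx_block.
have hAt : At = W *m S' *m Z + Y.
  rewrite /At /W /S' /Z /Y mulmx_block mul_block_col !mul0mx !mulmx0 !addr0 !add0r mul1mx.
  by rewrite hA hB mul0mx mul1mx addr0 add_col_mx addr0.
have hUt : At - Ut *m St *m Vt = W *m E' *m Z + Y.
  rewrite hAt /Ut /Vt /E' /W !mulmxA mulmxBr mulmxBl !mulmxA.
  by rewrite addrAC.
rewrite hUt frobT [frob2 E]frobT [frob2 E']frobT.
have expand : forall X1 Y1 : 'M[R]_(m + p, n), \tr ((X1 + Y1) *m (X1 + Y1)^T) =
    \tr (X1 *m X1^T) + \tr (X1 *m Y1^T) + (\tr (Y1 *m X1^T) + \tr (Y1 *m Y1^T)).
  by move=> X1 Y1; rewrite linearD /= mulmxDl !mulmxDr !mxtraceD.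
rewrite expand.
have cross : \tr (W *m E' *m Z *m Y^T) = 0.
  rewrite -!mulmxA mxtrace_mulC -!mulmxA.
  have -> : Y^T *m W = (W^T *m Y)^T by rewrite trmx_mul trmxK.
  by rewrite hWY trmx0 !mulmx0 mxtrace0.
have cross2 : \tr (Y *m (W *m E' *m Z)^T) = 0.
  by rewrite -mxtrace_tr trmx_mul trmxK cross.
rewrite cross cross2 addr0 add0r.
have -> : \tr (W *m E' *m Z *m (W *m E' *m Z)^T) = \tr (E' *m E'^T).
  rewrite !trmx_mul -!mulmxA [Z *m _]mulmxA hZZ mul1mx.
  rewrite mxtrace_mulC -!mulmxA hWW mulmx1 //.
have -> : \tr (Y *m Y^T) = \tr (E *m E^T).
  by rewrite /Y tr_col_mx mul_col_row mxtrace_block !mul0mx mxtrace0 addr0.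
by rewrite addrC.
Qed.
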